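(* For any $q\ge1$, let $u_{n,q}$ (resp. $v_{n,q}$) be the total number of occurrences of the letter $1$ in all words of $\mathcal{W}^q_n$ (resp. of $\mathcal{B}_n(1^{q+1})$). Then $$\lim_{n\to\infty}\frac{u_{n,q}-v_{n,q}}{n\cdot f_{n+q+1,q+1}}=0.$$
   Context: For $q\ge1$, a binary word is $q$-decreasing if for every maximal run of $0$s, of length $a>0$, together with the (possibly empty) maximal run of $1$s immediately following it, of length $b$, one has $q\cdot a>b$; $\mathcal{W}^q_n$ is the set of $q$-decreasing words of length $n$. $\mathcal{B}_n(1^{q+1})$ is the set of binary words of length $n$ with no factor $1^{q+1}$. The $k$-generalized Fibonacci numbers are $f_{n,k}=0$ for $0\le n\le k-2$, $f_{k-1,k}=1$, and $f_{n,k}=\sum_{i=1}^kf_{n-i,k}$ for $n\ge k$. *)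

(* Defs.v *)
(* Binary words: false = letter 0, true = letter 1. *)
From mathcomp Require Import all_boot all_order all_algebra.
From mathcomp Require Import all_classical all_reals all_analysis.
Set Implicit Arguments. Unset Strict Implicit. Unset Printing Implicit Defensive.

Definition zrun (w : seq bool) (i : nat) : nat := find id (drop i w).
Definition orun (w : seq bool) (i : nat) : nat :=
  find negb (drop (zrun w i) (drop i w)).

Definition zrun_start (w : seq bool) (i : nat) : bool :=
  (i < size w) && (nth true w i == false) && ((i == 0) || nth false w i.-1).

Definition qdecreasing (q : nat) (w : seq bool) : bool :=
  all (fun i => zrun_start w i ==> (orun w i < q * zrun w i)) (iota 0 (size w)).

Definition avoids_ones (q : nat) (w : seq bool) : bool :=
  ~~ infix (nseq q.+1 true) w.

Definition u_count (q n : nat) : nat :=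
  \sum_(w : n.-tuple bool | qdecreasing q w) count id w.
Definition v_count (q n : nat) : nat :=
  \sum_(w : n.-tuple bool | avoids_ones q w) count id w.

Definition kfib_next (k : nat) (s : seq nat) : nat :=
  let n := size s in
  if n < k.-1 then 0 else if n == k.-1 then 1 else sumn (drop (n - k) s).
Fixpoint kfib_list (k n : nat) : seq nat :=
  match n with
  | 0 => [:: kfib_next k [::]]
  | n'.+1 => let s := kfib_list k n' in rcons s (kfib_next k s)
  end.
Definition kfib (k n : nat) : nat := nth 0 (kfib_list k n) n.

(* Main.v *)
Require Import Defs.
From mathcomp Require Import all_boot all_order all_algebra.
From mathcomp Require Import all_classical all_reals all_analysis.
From mathcomp Require Import zify.
Import Order.TTheory GRing.Theory Num.Theory numFieldNormedType.Exports.
Set Implicit Arguments. Unset Strict Implicit. Unset Printing Implicit Defensive.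

Module Cor5Aux.

Definition okp (q : nat) (w : seq bool) (i : nat) :=
  zrun_start w i ==> (orun w i < q * zrun w i).
Definition qrest q w := all (fun i => (i != 0) ==> okp q w i) (iota 0 (size w)).

Lemma okp_cons q x w i :
  okp q (x :: w) i.+1 = if i is 0 then x ==> okp q w 0 else okp q w i.
Proof.
rewrite /okp /zrun_start /orun /zrun /=.
case: i => [|i] /=; first by case: x; rewrite ?andbT ?andbF.
by [].
Qed.

Lemma qdecE q w : qdecreasing q w = all (okp q w) (iota 0 (size w)).
Proof. by []. Qed.

Lemma all_iota_S (P : pred nat) n :
  all P (iota 0 n.+1) = P 0 && all (fun i => P i.+1) (iota 0 n).
Proof. by rewrite /= -add1n iotaDl all_map. Qed.

Lemma qdec_true q w : qdecreasing q (true :: w) = qdecreasing q w.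
Proof.
rewrite !qdecE [size _]/= all_iota_S.
have -> : okp q (true :: w) 0 = true by rewrite /okp /zrun_start.
apply: eq_all => i /=; rewrite okp_cons; by case: i.
Qed.

Lemma qdec_false q w : qdecreasing q (false :: w) =
  (find negb (drop (find id w) w) < q * (find id w).+1) && qrest q w.
Proof.
rewrite !qdecE [size _]/= all_iota_S.
rewrite {1}/okp /zrun_start /orun /zrun /=; congr andb.
rewrite /qrest; elim: (iota _ _) => //= i s ->; rewrite okp_cons; by case: i.
Qed.

Lemma qrest_cons q x w : qrest q (x :: w) = if x then qdecreasing q w else qrest q w.
Proof.
rewrite /qrest [size _]/= all_iota_S /=.
case: x.
  rewrite qdecE; apply: eq_all => i /=; rewrite okp_cons; by case: i.
elim: (iota _ _) => //= i s ->; rewrite okp_cons; by case: i.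
Qed.

Lemma qrest_nil q : qrest q [::]. Proof. by []. Qed.
Lemma qdec_nil q : qdecreasing q [::]. Proof. by []. Qed.

Fixpoint decu (cs : seq nat) : seq bool :=
  if cs is c :: cs' then false :: nseq c true ++ decu cs' else [::].
Definition dec (p : nat * seq nat) : seq bool := nseq p.1 true ++ decu p.2.
Fixpoint enc (w : seq bool) : nat * seq nat :=
  match w with
  | [::] => (0, [::])
  | b :: w' => if b then ((enc w').1.+1, (enc w').2) else (0, (enc w').1 :: (enc w').2)
  end.

Lemma dec_enc w : dec (enc w) = w.
Proof. by elim: w => [|[] w IH] //=; rewrite /dec /= in IH *; rewrite IH. Qed.

Lemma enc_dec s cs : enc (dec (s, cs)) = (s, cs).
Proof.
rewrite /dec /=; elim: s => [|s IH] /=; last by rewrite IH.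
elim: cs => [|c cs IH] //=.
suff -> : enc (nseq c true ++ decu cs) = (c, cs) by [].
by elim: c => [|c IHc] //=; rewrite IHc.
Qed.

Lemma size_decu cs : size (decu cs) = size cs + sumn cs.
Proof. elim: cs => [|c cs IH] //=; rewrite size_cat size_nseq IH; lia. Qed.

Lemma size_dec s cs : size (dec (s, cs)) = s + size cs + sumn cs.
Proof. rewrite /dec size_cat size_nseq size_decu /=; lia. Qed.

Lemma count_decu cs : count id (decu cs) = sumn cs.
Proof. elim: cs => [|c cs IH] //=; rewrite count_cat count_nseq IH /=; lia. Qed.

Lemma count_dec s cs : count id (dec (s, cs)) = s + sumn cs.
Proof. by rewrite /dec count_cat count_nseq count_decu /= mul1n. Qed.

Lemma find_negb_decu cs : find negb (decu cs) = 0.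
Proof. by case: cs. Qed.

Lemma qdec_nseq_true q k l : qdecreasing q (nseq k true ++ l) = qdecreasing q l.
Proof. by elim: k => [|k IH] //=; rewrite qdec_true. Qed.

Lemma qrest_nseq_false q k l : qrest q (nseq k false ++ l) = qrest q l.
Proof. by elim: k => [|k IH] //=; rewrite qrest_cons. Qed.

Lemma qdec_block q a b cs :
  qdecreasing q (false :: nseq a false ++ nseq b.+1 true ++ decu cs) =
  (b.+1 < q * a.+1) && qdecreasing q (decu cs).
Proof.
rewrite qdec_false qrest_nseq_false qrest_cons qdec_nseq_true.
rewrite find_cat has_nseq andbF size_nseq /= addn0 drop_size_cat ?size_nseq //=.
by rewrite find_cat has_nseq andbF size_nseq find_negb_decu addn0.
Qed.

Fixpoint wl (q z : nat) (cs : seq nat) : bool :=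
  match cs with
  | [::] => true
  | c :: cs' => if c == 0 then wl q z.+1 cs' else (c %/ q <= z) && wl q 0 cs'
  end.

Lemma nseq_cons_false (T : Type) (z : nat) (x : T) l : nseq z x ++ x :: l = x :: nseq z x ++ l.
Proof. by elim: z => [|z IH] //=; rewrite IH. Qed.

Lemma qdec_zeros q z cs : 0 < q ->
  qdecreasing q (nseq z false ++ decu cs) = wl q z cs.
Proof.
move=> q0; elim: cs z => [|c cs IH] z /=.
  rewrite cats0; case: z => [|z] //.
  rewrite /= qdec_false find_nseq /= mul1n -{1}(size_nseq z false) drop_size /=.
  have -> : qrest q (nseq z false) by rewrite -[nseq z false]cats0 qrest_nseq_false.
  by rewrite andbT muln_gt0 q0.

rewrite nseq_cons_false; case: c => [|b] /=.
  by rewrite -(IH z.+1).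
rewrite qdec_block -(IH 0) /=.
by congr andb; rewrite -(ltnS (b.+1 %/ q) z) ltn_divLR // mulnC.

Qed.

Lemma qdec_dec q s cs : 0 < q -> qdecreasing q (dec (s, cs)) = wl q 0 cs.
Proof. by move=> q0; rewrite /dec /= qdec_nseq_true -(qdec_zeros 0 cs q0). Qed.

Fixpoint avr q (w : seq bool) : bool :=
  if w is b :: w' then (find negb w <= q) && avr q w' else true.

Lemma prefix_nseq_true m l : prefix (nseq m true) l = (m <= find negb l).
Proof.
elim: m l => [|m IH] [|b l] //=.
by case: b => //=; rewrite IH.
Qed.

Lemma avoidsE q w : avoids_ones q w = avr q w.
Proof.
rewrite /avoids_ones; elim: w => [|b w IH] //.
by rewrite infix_consl negb_or prefix_nseq_true -ltnNge ltnS IH.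
Qed.

Lemma avr_ones q c cs : avr q (nseq c true ++ decu cs) = (c <= q) && avr q (decu cs).
Proof.
elim: c => [|c IH] //=.
rewrite IH find_cat has_nseq andbF size_nseq find_negb_decu addn0.
by case: leqP => h //=; rewrite ltnW.
Qed.

Lemma avr_dec q s cs : avr q (dec (s, cs)) = (s <= q) && all (fun c => c <= q) cs.
Proof.
rewrite /dec /= avr_ones; congr andb.
by elim: cs => [|c cs IH] //=; rewrite avr_ones IH.
Qed.

Fixpoint phi (q : nat) (cs : seq nat) : seq nat * option (nat * nat) :=
  match cs with
  | [::] => ([::], None)
  | c :: cs' => let p := phi q cs' in
     match p.2 with
     | None => if c %/ q == 0 then (c :: p.1, None)
               else (q :: p.1, Some ((c %/ q).-1, c %% q))
     | Some (k, r) => if k == 0 then (r :: p.1, None) else (q :: p.1, Some (k.-1, r))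
     end
  end.

Fixpoint theta (q : nat) (xs : seq nat) : seq nat * nat :=
  match xs with
  | [::] => ([::], 0)
  | x :: xs' => let p := theta q xs' in
     if x == q then (p.1, p.2.+1) else (nseq p.2 0 ++ (x + q * p.2) :: p.1, 0)
  end.

Lemma U1 q cs z : 0 < q -> wl q z cs ->
  let p := phi q cs in
  all (fun c => c <= q) p.1 /\ size p.1 = size cs /\
  match p.2 with
  | None => theta q p.1 = (cs, 0) /\ sumn p.1 = sumn cs
  | Some (k, r) => k < z /\ r < q /\ sumn p.1 + q * k + r = sumn cs /\
      exists j rest, cs = nseq j 0 ++ (q * (j + k).+1 + r) :: rest /\
                     theta q p.1 = (rest, j.+1)
  end.
Proof.
move=> q0; elim: cs z => [|c cs IH] z //=.
case E: (phi q cs) => [ou sx] /=.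
case: c => [|b] /=.
  move=> /IH; rewrite E /= => -[ao [so]].
  case: sx E => [[k r]|] E /=.
    move=> [kz [rq [sm [j [rest [csE th]]]]]]; clear E IH.
    case: k kz sm th csE => [|k] kz sm th csE /=.
      rewrite th /= ao (ltnW rq) /= so; split=> //; split=> //.
      split; last by lia.
      by rewrite ifN ?(ltn_eqF rq) // csE addn0 addnC.
    rewrite leqnn ao eqxx th /= so; split=> //; split=> //.
    split; first by lia.
    split=> //.
    split; first by lia.
    exists j.+1, rest; split=> //.
    by rewrite csE /= addSnnS.
  move=> [th sm]; rewrite div0n eqxx /= ao th so; split=> //; split=> //.
  by rewrite ifN ?(ltn_eqF q0) //= muln0 addn0 sm.

move=> /andP [hb /IH]; rewrite E /= => -[ao [so]].
case: sx E => [[k r]|] E /=; first by move=> [].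
move=> [th sm].
case: eqP => hd /=.
  have bq : b.+1 < q by rewrite ltnNge -(divn_gt0 _ q0) hd.
  rewrite ao (ltnW bq) th /= so ifN ?(ltn_eqF bq) //= muln0 addn0 sm.
  by do !split.
have m0 : 0 < b.+1 %/ q by rewrite lt0n; apply/eqP.
rewrite ao leqnn /= so th; split=> //; split=> //.
have de := divn_eq b.+1 q.
split; first by lia.
split; first by rewrite ltn_pmod.
move: m0 de; set r := b.+1 %% q; case: (b.+1 %/ q) => [|m] // _.
rewrite mulnC mulnS => de /=.
split; first by lia.
exists 0, cs; split => //=.
by rewrite mulnS -de.
by rewrite eqxx.
Qed.

Lemma phi_zeros q l p k r j : phi q l = (p, Some (k, r)) -> j <= k ->
  phi q (nseq j 0 ++ l) = (nseq j q ++ p, Some (k - j, r)).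
Proof.
move=> E; elim: j => [|j IH] hj; first by rewrite subn0.
rewrite /= IH ?(ltnW hj) //= subn_eq0 leqNgt hj /=.
by congr (_, Some (_, _)); lia.
Qed.

Lemma phi_zeros_end q l p k r : phi q l = (p, Some (k, r)) ->
  phi q (nseq k.+1 0 ++ l) = (r :: nseq k q ++ p, None).
Proof.
move=> E; rewrite /= (phi_zeros E (leqnn k)) /= subnn /=.
by [].
Qed.

Lemma wl_mono q z z' l : z <= z' -> wl q z l -> wl q z' l.
Proof.
elim: l z z' => [|c l IH] z z' hz //=.
case: eqP => _; first by apply: IH.
by move=> /andP [h1 ->]; rewrite (leq_trans h1 hz).
Qed.

Lemma wl_zeros q z j l : wl q z (nseq j 0 ++ l) = wl q (z + j) l.
Proof. by elim: j z => [|j IH] z /=; rewrite ?addn0 // IH addnS. Qed.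


Lemma theta_nseq_q q t l :
  theta q (nseq t q ++ l) = ((theta q l).1, (theta q l).2 + t).
Proof.
elim: t => [|t IH]; first by rewrite addn0 cat0s; case: (theta q l).
by rewrite /= IH eqxx addnS.
Qed.

Lemma U2 q xs : 0 < q -> all (fun x => x <= q) xs ->
  let p := theta q xs in
  exists ys, xs = nseq p.2 q ++ ys /\ phi q p.1 = (ys, None) /\ wl q 0 p.1 /\
    size p.1 = size ys /\ sumn p.1 = sumn ys.
Proof.
move=> q0; elim: xs => [|x xs IH] /=; first by exists [::].
move=> /andP [xq /IH] {IH}.
case: (theta q xs) => [ou m] /= [ys [xsE [ph [w [so su]]]]].
case: eqP => [xeq|xneq] /=.
  by exists ys; rewrite xsE xeq.
have xq' : x < q by rewrite ltn_neqAle xq andbT; apply/eqP.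
exists (x :: xs); split=> //.
have hc : phi q ((x + q * m) :: ou) =
    if m == 0 then (x :: ys, None) else (q :: ys, Some (m.-1, x)).
  rewrite /= ph /= [x + _]addnC [q * m]mulnC divnMDl // divn_small // addn0.
  rewrite modnMDl modn_small //.
  by case: m {xsE}.
split.
  case: m xsE hc => [|m] xsE hc.
    by rewrite cat0s hc xsE.
  have := phi_zeros_end hc; rewrite /= => ->.
  by rewrite xsE nseq_cons_false.
split.
  rewrite wl_zeros add0n /=.
  case: eqP => h0.
    by apply: wl_mono w.
  rewrite w andbT [x + _]addnC [q * m]mulnC divnMDl // divn_small // addn0.
  by [].
rewrite size_cat size_nseq /= sumn_cat sumn_nseq /= xsE size_cat size_nseq sumn_cat sumn_nseq.
split; lia.
Qed.

Definition Psiu q (p : nat * seq nat) :=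
  (p.1 %% q.+1, nseq (p.1 %/ q.+1) q ++ (phi q p.2).1).
Definition Thetau q (p : nat * seq nat) :=
  (p.1 + q.+1 * (theta q p.2).2, (theta q p.2).1).
Definition Psi q w := dec (Psiu q (enc w)).
Definition Theta q x := dec (Thetau q (enc x)).

Lemma Psi_facts0 q s cs : 0 < q -> qdecreasing q (dec (s, cs)) ->
  let w := dec (s, cs) in
  [/\ avoids_ones q (Psi q w), size (Psi q w) = size w,
      count id w = count id (Psi q w) + s %/ q.+1
    & Theta q (Psi q w) = w].
Proof.
move=> q0; rewrite qdec_dec // => hw /=.
rewrite /Psi /Theta enc_dec /Psiu /=.
have := U1 q0 hw; case: (phi q cs) => ou [[k r]|] /=; first by case=> _ [_ []].
move=> [ao [so [th sm]]].
set t := s %/ q.+1.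
have de : s = t * q.+1 + s %% q.+1 by rewrite /t -divn_eq.
split.
- by rewrite avoidsE avr_dec /= -ltnS ltn_pmod //= all_cat all_nseq ao leqnn orbT.
- rewrite !size_dec size_cat sumn_cat size_nseq sumn_nseq so sm.
  rewrite mulnSr in de; rewrite [q * t]mulnC; lia.
- rewrite !count_dec sumn_cat sumn_nseq sm.
  rewrite mulnSr in de; rewrite [q * t]mulnC; lia.
- rewrite enc_dec /Thetau /= theta_nseq_q th /= add0n.
  by rewrite addnC mulnC -de.
Qed.

Lemma Psi_facts q w : 0 < q -> qdecreasing q w ->
  [/\ avoids_ones q (Psi q w), size (Psi q w) = size w,
      count id w = count id (Psi q w) + (enc w).1 %/ q.+1
    & Theta q (Psi q w) = w].
Proof.
move=> q0 hw.
have := @Psi_facts0 q (enc w).1 (enc w).2 q0.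
rewrite -surjective_pairing dec_enc /=; by apply.
Qed.

Lemma Theta_facts0 q s xs : 0 < q -> avoids_ones q (dec (s, xs)) ->
  let x := dec (s, xs) in
  [/\ qdecreasing q (Theta q x), size (Theta q x) = size x
    & Psi q (Theta q x) = x].
Proof.
move=> q0; rewrite avoidsE avr_dec => /andP [sq hx] /=.
rewrite /Psi /Theta enc_dec /Thetau /=.
have := U2 q0 hx; case: (theta q xs) => ou m /= [ys [xsE [ph [w [so su]]]]].
split.
- by rewrite qdec_dec.
- rewrite !size_dec xsE size_cat sumn_cat size_nseq sumn_nseq so su.
  rewrite mulSn; lia.
- rewrite enc_dec /Psiu /= ph /= xsE.
  have e1 : (s + q.+1 * m) %% q.+1 = s.
    by rewrite mulnC addnC modnMDl modn_small.
  have e2 : (s + q.+1 * m) %/ q.+1 = m.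
    by rewrite mulnC addnC divnMDl // divn_small // addn0.
  by rewrite e1 e2.
Qed.

Lemma Theta_facts q x : 0 < q -> avoids_ones q x ->
  [/\ qdecreasing q (Theta q x), size (Theta q x) = size x
    & Psi q (Theta q x) = x].
Proof.
move=> q0 hx.
have := @Theta_facts0 q (enc x).1 (enc x).2 q0.
rewrite -surjective_pairing dec_enc /=; by apply.
Qed.

Fixpoint wordsl n : seq (seq bool) :=
  if n is n'.+1 then [seq false :: w | w <- wordsl n'] ++ [seq true :: w | w <- wordsl n']
  else [:: [::]].

Lemma consb_inj (b : bool) : injective (cons b).
Proof. by move=> x y [].
Qed.

Lemma mem_wordsl n w : (w \in wordsl n) = (size w == n).
Proof.
elim: n w => [|n IH] [|b w] //=; rewrite mem_cat.
- by apply/negbTE; rewrite negb_or; apply/andP; split; apply/mapP => -[].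
- case: b.
    rewrite orbC; have -> : (true :: w \in [seq false :: w | w <- wordsl n]) = false.
      by apply/negbTE; apply/mapP => -[].
    by rewrite orbF (mem_map (@consb_inj true)) IH.
  have -> : (false :: w \in [seq true :: w | w <- wordsl n]) = false.
    by apply/negbTE; apply/mapP => -[].
  by rewrite orbF (mem_map (@consb_inj false)) IH.
Qed.

Lemma uniq_wordsl n : uniq (wordsl n).
Proof.
elim: n => [|n IH] //=; rewrite cat_uniq !map_inj_uniq ?IH //=; try by move=> a b [].
rewrite andbT; apply/hasPn => x /mapP [y _ ->]; apply/mapP => -[z _]; discriminate.
Qed.

Lemma tuple_sum n (P : pred (seq bool)) (F : seq bool -> nat) :
  \sum_(w : n.-tuple bool | P w) F w = \sum_(w <- wordsl n | P w) F w.
Proof.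
rewrite [LHS](_ : _ = \sum_(w <- map val (index_enum (n.-tuple bool)) | P w) F w);
  last by rewrite big_map.
apply: perm_big; apply: uniq_perm.
- by rewrite map_inj_uniq ?index_enum_uniq //; apply: val_inj.
- exact: uniq_wordsl.
move=> w; rewrite mem_wordsl; apply/mapP/idP => [[t _ ->]|/eqP hw].
  by rewrite size_tuple.
by exists (Tuple (introT eqP hw)); rewrite ?mem_index_enum.
Qed.

Lemma sum_split n (P : pred (seq bool)) (F : seq bool -> nat) :
  \sum_(w <- wordsl n.+1 | P w) F w =
  \sum_(w <- wordsl n | P (false :: w)) F (false :: w) +
  \sum_(w <- wordsl n | P (true :: w)) F (true :: w).
Proof. by rewrite /= big_cat !big_map. Qed.

Lemma sum_reindex n (A B : pred (seq bool)) (f g : seq bool -> seq bool)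
    (G : seq bool -> nat) :
  (forall w, A w -> [/\ B (f w), size (f w) = size w & g (f w) = w]) ->
  (forall x, B x -> [/\ A (g x), size (g x) = size x & f (g x) = x]) ->
  \sum_(x <- wordsl n | B x) G x = \sum_(w <- wordsl n | A w) G (f w).
Proof.
move=> hA hB; rewrite -big_filter -[RHS]big_filter -(big_map f xpredT).
apply: perm_big; apply: uniq_perm.
- exact/filter_uniq/uniq_wordsl.
- rewrite map_inj_in_uniq; first exact/filter_uniq/uniq_wordsl.
  move=> a b; rewrite !mem_filter => /andP [ha _] /andP [hb _] e.
  by case: (hA a ha) => _ _ <-; case: (hA b hb) => _ _ <-; rewrite e.
move=> x; rewrite mem_filter mem_wordsl; apply/andP/mapP.
  move=> [hx /eqP sx]; case: (hB x hx) => ha hs hf.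
  by exists (g x) => //; rewrite mem_filter ha mem_wordsl hs sx eqxx.
move=> [w]; rewrite mem_filter mem_wordsl => /andP [hw sw] ->.
by case: (hA w hw) => hb hs _; rewrite hb hs.
Qed.

Definition Lsum q n := \sum_(w <- wordsl n | qdecreasing q w) (enc w).1.
Definition cW q n := \sum_(w <- wordsl n | qdecreasing q w) 1.

Lemma uv_rel q n : 0 < q ->
  u_count q n = v_count q n + \sum_(w <- wordsl n | qdecreasing q w) (enc w).1 %/ q.+1.
Proof.
move=> q0; rewrite /u_count /v_count !tuple_sum.
rewrite (@sum_reindex n (qdecreasing q) (avoids_ones q) (Psi q) (Theta q)); first last.
- by move=> x hx; case: (Theta_facts q0 hx).
- by move=> w hw; case: (Psi_facts q0 hw).
rewrite -big_split /=; apply: eq_bigr => w hw.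
by case: (Psi_facts q0 hw).
Qed.

Lemma uv_le q n : 0 < q -> v_count q n <= u_count q n <= v_count q n + Lsum q n.
Proof.
move=> q0; rewrite uv_rel // leq_addr leq_add2l /Lsum.
by apply: leq_sum => w _; apply: leq_div.
Qed.

Lemma cW_cB q n : 0 < q ->
  cW q n = \sum_(x <- wordsl n | avoids_ones q x) 1.
Proof.
move=> q0; rewrite /cW; symmetry.
apply: (@sum_reindex n (qdecreasing q) (avoids_ones q) (Psi q) (Theta q) (fun _ => 1)).
- by move=> w hw; case: (Psi_facts q0 hw).
- by move=> x hx; case: (Theta_facts q0 hx).
Qed.

Lemma Lsum0 q : Lsum q 0 = 0.
Proof. rewrite /Lsum /=.
by rewrite big_mkcond big_seq1.
Qed.

Lemma LsumS q n : Lsum q n.+1 = Lsum q n + cW q n.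
Proof.
rewrite /Lsum sum_split /= big1 // add0n.
rewrite (eq_bigl (qdecreasing q)); last by move=> w; rewrite qdec_true.
rewrite /cW -big_split /=; apply: eq_bigr => w _; by rewrite addn1.
Qed.

Definition cnt q k n := \sum_(w <- wordsl n | (k + find negb w <= q) && avr q w) 1.

Lemma avr_find q w : avr q w -> find negb w <= q.
Proof. by case: w => [|b w] //= /andP []. Qed.

Lemma cnt_rec q k n : k <= q -> cnt q k n.+1 = cnt q 0 n + cnt q k.+1 n.
Proof.
move=> kq; rewrite /cnt sum_split; congr (_ + _).
  apply: eq_bigl => w /=; rewrite addn0 kq /= add0n.
  by case h: (avr q w); rewrite ?andbF // (avr_find h).
apply: eq_bigl => w /=; rewrite addnS.
case h: (avr q w); rewrite ?andbF // !andbT.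
rewrite addSn andb_idr // => H; exact: leq_ltn_trans (leq_addl k _) H.
Qed.

Lemma cnt0 q n : cnt q 0 n = \sum_(x <- wordsl n | avoids_ones q x) 1.
Proof.
apply: eq_bigl => w; rewrite avoidsE add0n.
by case h: (avr q w); rewrite ?andbF // (avr_find h).
Qed.

Lemma size_kfib_list k n : size (kfib_list k n) = n.+1.
Proof. by elim: n => [|n IH] //=; rewrite size_rcons IH. Qed.

Lemma kfibS0 k n : kfib k n.+1 = kfib_next k (kfib_list k n).
Proof. by rewrite /kfib /= nth_rcons size_kfib_list ltnn eqxx. Qed.

Lemma kfib_listE k n : kfib_list k n = [seq kfib k i | i <- iota 0 n.+1].
Proof.
elim: n => [|n IH] //.
rewrite [RHS](_ : _ = [seq kfib k i | i <- iota 0 n.+1] ++ [:: kfib k n.+1]);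
  last by rewrite -[n.+2]addn1 iotaD map_cat.
by rewrite [kfib_list k n.+1]/= kfibS0 IH cats1.
Qed.

Lemma kfibS k n : kfib k n.+1 = kfib_next k [seq kfib k i | i <- iota 0 n.+1].
Proof. by rewrite kfibS0 kfib_listE. Qed.

Lemma F_small q i : 0 < q -> i < q -> kfib q.+1 i = 0.
Proof.
move=> q0; case: i => [|i] hi.
  by rewrite /kfib /= /kfib_next /= q0.
by rewrite kfibS /kfib_next size_map size_iota /= hi.
Qed.

Lemma F_q q : 0 < q -> kfib q.+1 q = 1.
Proof.
case: q => [|q] // _.
by rewrite kfibS /kfib_next size_map size_iota /= ltnn eqxx.
Qed.

Lemma F_rec q m : q.+1 <= m ->
  kfib q.+1 m = \sum_(m - q.+1 <= i < m) kfib q.+1 i.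
Proof.
case: m => [|j] // hj.
rewrite kfibS /kfib_next size_map size_iota -map_drop drop_iota [q.+1.-1]/=.
rewrite ltnNge (ltnW hj) /= ifN; last by rewrite neq_ltn hj orbT.
rewrite sumnE big_map /index_iota add0n.
by congr (\sum_(i <- iota _ _) _); lia.
Qed.

Lemma cnt_F q k n : 0 < q -> k <= q.+1 ->
  cnt q k n = \sum_(n + k <= i < n + q.+1) kfib q.+1 i.
Proof.
move=> q0; elim: n k => [|n IH] k hk.
  rewrite /cnt /= big_cons big_nil /= !addn0 andbT add0n.
  case: (ltngtP k q.+1) hk => // [hk|->] _; last by rewrite ltnn add0n big_geq.
  rewrite add0n -ltnS hk big_nat_recr //= F_q // addn1 big_nat_cond big1 // => i /andP [/andP [_ hi] _].
  exact: F_small.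
case: (ltngtP k q.+1) hk => // [hk|->] _.
  rewrite cnt_rec // IH // IH // addn0.
  rewrite [n.+1 + q.+1]addSn big_nat_recr /=; last by lia.
  rewrite [kfib q.+1 (n + q.+1)]F_rec ?leq_addl // addnK addnC addSnnS.
  by [].
rewrite big_geq // /cnt big_pred0 // => w.
by rewrite ltnNge leq_addr.
Qed.

Lemma cB_F q n : 0 < q -> \sum_(x <- wordsl n | avoids_ones q x) 1 = kfib q.+1 (n + q.+1).
Proof.
move=> q0; rewrite -cnt0 cnt_F // addn0 [RHS]F_rec ?leq_addl //.
by rewrite addnK.
Qed.

Lemma F_add q m : 0 < q -> q <= m.+1 ->
  kfib q.+1 m.+1 + kfib q.+1 m <= kfib q.+1 m.+2.
Proof.
move=> q0 hm; rewrite [kfib q.+1 m.+2]F_rec // big_nat_recr /=; last by lia.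
rewrite big_nat_recr /=; last by lia.
by rewrite -addnA [kfib _ m + _]addnC leq_addl.
Qed.

Lemma F_double q m : 0 < q -> q <= m -> kfib q.+1 m.+1 <= 2 * kfib q.+1 m.
Proof.
move=> q0 hm; rewrite [kfib q.+1 m.+1]F_rec // big_nat_recr /=; last by lia.
rewrite subSS mul2n -addnn leq_add2r.
case: (ltngtP q m) hm => // [hqm|<-] _.
  rewrite [X in _ <= X]F_rec // [X in _ <= X](@big_cat_nat _ _ _ (m - q)) /=; [|lia|lia].
  by rewrite leq_addl.
by rewrite subnn big_nat_cond big1 // => i /andP [/andP [_ hi] _]; apply: F_small.
Qed.

Lemma Lsum_bound q n : 0 < q -> Lsum q n <= kfib q.+1 (n + q.+2).
Proof.
move=> q0; elim: n => [|n IH]; first by rewrite Lsum0.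
rewrite LsumS cW_cB // cB_F //.
have e1 : n.+1 + q.+2 = (n + q.+1).+2 by lia.
have e2 : n + q.+2 = (n + q.+1).+1 by lia.
rewrite e1; rewrite e2 in IH.
apply: leq_trans (F_add _ _) => //; [exact: leq_add | lia].
Qed.

Lemma main_bound q n : 0 < q ->
  v_count q n <= u_count q n <= v_count q n + 2 * kfib q.+1 (n + q.+1).
Proof.
move=> q0; case/andP: (uv_le n q0) => -> h /=.
apply: (leq_trans h); rewrite leq_add2l.
apply: (leq_trans (Lsum_bound n q0)).
by rewrite (_ : n + q.+2 = (n + q.+1).+1) ?F_double ?leq_addl //; lia.
Qed.
End Cor5Aux.
Import Cor5Aux.

Local Open Scope ring_scope.
Local Open Scope classical_set_scope.

Theorem corollary5 (R : realType) (q : nat) (hq : (1 <= q)%N) :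
  (fun n : nat =>
     ((u_count q n)%:R - (v_count q n)%:R) / (n * kfib q.+1 (n + q + 1))%:R : R)
    @ \oo --> (0 : R).
Proof.
have q0 : (0 < q)%N := hq.
apply: (@squeeze_cvgr _ _ _ _ (fun _ => 0) (fun n => 4 * (n.+1%:R)^-1)).
- exists 1%N => // n /= hn.
  have := main_bound n q0.
  have -> : (n + q + 1 = n + q.+1)%N by rewrite addn1 addnS.
  set u := u_count q n; set v := v_count q n; set F := kfib q.+1 _.
  move=> /andP [hvu huv].
  rewrite -natrB //; apply/andP; split.
    by rewrite divr_ge0 // ler0n.
  have [F0|Fp] := eqVneq F 0%N.
    by rewrite F0 muln0 invr0 mulr0 mulr_ge0 // invr_ge0 ler0n.
  have A0 : (0 : R) < (n * F)%:R by rewrite ltr0n muln_gt0 hn lt0n Fp.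
  rewrite ler_pdivrMr // mulrAC ler_pdivlMr ?ltr0n //.
  rewrite -[4]/(4%:R : R) -!natrM ler_nat.
  have h2 : (u - v <= 2 * F)%N by lia.
  apply: (leq_trans (leq_mul h2 (leqnn n.+1))).
  nia.
- exact: cvg_cst.
- rewrite -(mulr0 4); apply: cvgMl_tmp; exact: cvg_harmonic.
Qed.
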